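(* Let $\mathcal{M}=(E,\rho)$ be a $q$-matroid and $V\le E$. (a) $\dim V-\rho(V)=\dim\mathrm{cyc}(V)-\rho(\mathrm{cyc}(V))$. (b) If $V=\mathrm{cyc}(V)\oplus W$, then $\rho(V)=\rho(\mathrm{cyc}(V))+\dim W$ and $\dim W=\rho(W)$, i.e. $W$ is independent.
   Context: Let $\mathbb{F}=\mathbb{F}_q$. A $q$-matroid is $\mathcal{M}=(E,\rho)$, $E$ a finite-dimensional $\mathbb{F}$-vector space, $\rho$ from subspaces to $\mathbb{Z}_{\ge0}$ with $0\le\rho(V)\le\dim V$, monotone and submodular. Independent: $\rho(V)=\dim V$. Cyclic core: $\mathrm{cyc}(V)=\{x\in V\mid\rho(W)=\rho(V)\text{ for all }W\le V\text{ with }W+\langle x\rangle=V\}$ (a subspace of $V$). *)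

(* Defs.v *)
From mathcomp Require Import all_boot all_algebra.
From mathcomp Require Import boolp.
Set Implicit Arguments. Unset Strict Implicit. Unset Printing Implicit Defensive.
Local Open Scope ring_scope.

(* E = 'rV[F]_n, a finite-dimensional vector space over the finite field F = F_q.
   Subspaces are {vspace 'rV[F]_n}; a rank function is rho : {vspace _} -> nat. *)

Definition qmatroid (F : finFieldType) (n : nat) (rho : {vspace 'rV[F]_n} -> nat) : Prop :=
  [/\ (forall V, (rho V <= \dim V)%N),
      (forall V W, (V <= W)%VS -> (rho V <= rho W)%N) &
      (forall V W, (rho (V + W)%VS + rho (V :&: W)%VS <= rho V + rho W)%N)].

Definition in_cyc (F : finFieldType) (n : nat) (rho : {vspace 'rV[F]_n} -> nat)
    (V : {vspace 'rV[F]_n}) (x : 'rV[F]_n) : Prop :=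
  x \in V /\
  forall W : {vspace 'rV[F]_n}, (W <= V)%VS -> (W + <[x]>)%VS = V -> rho W = rho V.

(* cyc(V), as a subspace: the span of the set of elements satisfying in_cyc
   (this set is itself a subspace, so the span is exactly that set). *)
Definition cyc (F : finFieldType) (n : nat) (rho : {vspace 'rV[F]_n} -> nat)
    (V : {vspace 'rV[F]_n}) : {vspace 'rV[F]_n} :=
  <<[seq x <- enum 'rV[F]_n | `[< in_cyc rho V x >]]>>%VS.

(* Main.v *)
Require Import Defs.
From mathcomp Require Import all_boot all_algebra.
From mathcomp Require Import boolp.
From mathcomp Require Import zify.
From Stdlib Require Import Classical.
Set Implicit Arguments. Unset Strict Implicit. Unset Printing Implicit Defensive.
Local Open Scope ring_scope.

Section S.
Variables (F : finFieldType) (n : nat) (rho : {vspace 'rV[F]_n} -> nat).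
Hypothesis hq : qmatroid rho.

Let rle V : (rho V <= \dim V)%N. Proof. by case: hq. Qed.
Let rmon V W : (V <= W)%VS -> (rho V <= rho W)%N. Proof. by case: hq => _ h _; apply: h. Qed.
Let rsub V W : (rho (V + W)%VS + rho (V :&: W)%VS <= rho V + rho W)%N.
Proof. by case: hq => _ _ h; apply: h. Qed.

Lemma lower A V : (A <= V)%VS -> (rho V + \dim A <= rho A + \dim V)%N.
Proof.
move=> AV.
have e1 := addv_diff_cap V A.
have e2 := dimv_cap_compl V A.
have cA : (V :&: A)%VS = A by apply/capv_idPr.
rewrite cA in e1 e2.
have := rsub (V :\: A)%VS A. rewrite e1.
have := rle (V :\: A)%VS. lia.
Qed.

Lemma cyc_sub V : (cyc rho V <= V)%VS.
Proof.
apply/span_subvP => x; rewrite mem_filter => /andP[/asboolP [h _] _]; exact: h.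
Qed.

Lemma cyc_subW V W : (W <= V)%VS -> rho W <> rho V -> (\dim W).+1 = \dim V ->
  (cyc rho V <= W)%VS.
Proof.
move=> WV rW dW; apply/span_subvP => y; rewrite mem_filter => /andP[/asboolP [yV h] _].
apply/negPn/negP => yW; apply: rW; apply: h => //.
apply/eqP; rewrite eqEdim subv_add WV /= -memvE yV /= -dW.
have s : (W <= W + <[y]>)%VS by apply: addvSl.
have := dimv_leqif_eq s.
case=> le1 eq1.
rewrite ltn_neqAle le1 andbT eq1.
apply/eqP => e; move/negP: yW; apply; rewrite e; apply: (subvP (addvSr _ _)); exact: memv_line.
Qed.

Lemma main V : forall k U, (\dim U <= k)%N -> (cyc rho V <= U)%VS -> (U <= V)%VS ->
  (rho U + \dim V <= rho V + \dim U)%N ->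
  (rho (cyc rho V) + \dim V <= rho V + \dim (cyc rho V))%N.
Proof.
elim=> [|k IH] U dU CU UV P.
  have : (U <= cyc rho V)%VS.
    apply/subvP => x xU. move: dU; rewrite leqn0 dimv_eq0 => /eqP U0.
    by move: xU; rewrite U0 memv0 => /eqP ->; rewrite mem0v.
  move=> UC; have -> : cyc rho V = U by apply/eqP; rewrite eqEsubv UC CU.
  done.
case: (boolP (U <= cyc rho V)%VS) => [UC|nUC].
  by have -> : cyc rho V = U by apply/eqP; rewrite eqEsubv UC CU.
have /existsP [x /andP[xU xC]] : [exists x, (x \in U) && (x \notin cyc rho V)].
  apply: contraR nUC => /existsPn h; apply/subvP => x xU.
  by have := h x; rewrite xU /= negbK.
have xV : x \in V by apply: (subvP UV).
have ncx : ~ in_cyc rho V x.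
  move=> hc; move/negP: xC; apply; apply: memv_span.
  by rewrite mem_filter mem_enum andbT; apply/asboolP.
have [W [WV [WX rW]]] : exists W : {vspace 'rV[F]_n},
    [/\ (W <= V)%VS, (W + <[x]>)%VS = V & rho W <> rho V].
  apply: NNPP => hn; apply: ncx; split=> // W WV WX.
  apply: NNPP => rW; apply: hn; by exists W; split.
have WltV : (\dim W < \dim V)%N.
  have := dimv_leqif_eq WV; case=> le1 eq1.
  rewrite ltn_neqAle le1 andbT eq1; apply/eqP => e; apply: rW; by rewrite e.
have dV : (\dim V <= (\dim W).+1)%N.
  rewrite -WX; have := dimv_add_leqif W <[x]>; case=> le1 _.
  apply: (leq_trans le1); rewrite dim_vline; case: (x != 0) => /=; lia.
have dW : (\dim W).+1 = \dim V by lia.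
have CW := cyc_subW WV rW dW.
have UW : (U + W)%VS = V.
  apply/eqP; rewrite eqEsubv subv_add UV WV /= -{1}WX subv_add addvSr /=.
  by rewrite -memvE; apply: (subvP (addvSl _ _)).
have s1 := rsub U W. rewrite UW in s1.
have s2 := dimv_sum_cap U W. rewrite UW in s2.
have rWV : (rho W < rho V)%N.
  by rewrite ltn_neqAle (rmon WV) andbT; apply/eqP.
apply: (IH (U :&: W)%VS).
- lia.
- by rewrite subv_cap CU CW.
- exact: subv_trans (capvSl _ _) UV.
- lia.
Qed.

Lemma partb V W : (cyc rho V + W)%VS = V -> (cyc rho V :&: W)%VS = 0%VS ->
  (rho (cyc rho V) + \dim V = rho V + \dim (cyc rho V))%N ->
  rho V = (rho (cyc rho V) + \dim W)%N /\ \dim W = rho W.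
Proof.
move=> e0 e1 P.
have d := dimv_disjoint_sum e1. rewrite e0 in d.
have s := rsub (cyc rho V) W. rewrite e0 e1 in s.
have := rle W. lia.
Qed.

End S.

Theorem proposition3p10 (F : finFieldType) (n : nat)
    (rho : {vspace 'rV[F]_n} -> nat) (V : {vspace 'rV[F]_n}) :
  qmatroid rho ->
  ((\dim V)%:Z - (rho V)%:Z = (\dim (cyc rho V))%:Z - (rho (cyc rho V))%:Z)%R /\
  (forall W : {vspace 'rV[F]_n},
     (cyc rho V + W)%VS = V -> (cyc rho V :&: W)%VS = 0%VS ->
     rho V = (rho (cyc rho V) + \dim W)%N /\ \dim W = rho W).
Proof.
move=> hq.
have CV := @cyc_sub F n rho V.
have P1 := @main F n rho hq V _ V (leqnn _) CV (subvv V) (leqnn _).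
have P2 := @lower F n rho hq _ _ CV.
have P : (rho (cyc rho V) + \dim V = rho V + \dim (cyc rho V))%N by lia.
split; last by move=> W e0 e1; apply: (@partb F n rho hq V W e0 e1 P).
lia.
Qed.
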